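(* Suppose $u$ and $v$ are vertices of $G$ such that $u$ is an ancestor or a descendant of $v$ in $T$. Then, when routing from $u$ to $v$, the routing algorithm reaches $v$ after traversing $O(\log n)$ edges.
   Context: Let $T$ be a rooted tree on $n$ vertices with positive edge weights; $\delta_T(a,b)$ is the weight of the path in $T$ from $a$ to $b$. Ancestor/descendant refer to $T$, and a vertex counts as its own ancestor and descendant; ''deepest''/''highest'' refer to depth in $T$. $T_v$ is the subtree of $T$ rooted at $v$. For every non-leaf vertex $v$ fix a child $c_1(v)$ with $|T_{c_1(v)}|$ maximal; edges $(v,c_1(v))$ are leftmost. A subtree $R$ of $T$ is rooted at its vertex closest to the root, $rt(R)$, and inherits the leftmost labelling; $R_v$ is the subtree of $R$ rooted at $v$. $P_R(v)$ is the longest downward path from $v$ in $R$ using only leftmost edges, with last vertex $l(v)$; $l(R):=l(rt(R))$. A vertex $v$ of $R$ is $d$-balanced if $|R_{c_1(v)}|\le |R|-d$ (with $|R_{c_1(v)}|=0$ if $c_1(v)$ is undefined or not in $R$); $b_d(v)$ is the first $d$-balanced vertex on $P_R(v)$, or NULL. $CV(R,d)=\emptyset$ if $b_d(rt(R))$ is NULL, else $\{b\}\cup\bigcup_w CV(R_w,d)$ with $b=b_d(rt(R))$ and $w$ ranging over children of $b$ in $R$. Fix an integer $k\ge4$; for a subtree $R$ with $m$ vertices, $C_R=V(R)$ if $k\ge m/2-1$, else $C_R=CV(R,m/k)\cup\{l(R),rt(R)\}$. Canonical subtrees: $T$ is canonical; if $R$ is canonical, each component of $R$ minus $C_R$ is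 canonical. Each vertex $v$ lies in $C_R$ for exactly one canonical $R$, denoted $T^v$. The spanner $G$ has vertex set $V(T)$ and edges: all edges of $T$, and all pairs of distinct vertices of $C_R$ for every canonical $R$; edge $(a,b)$ has weight $\delta_T(a,b)$. Routing algorithm from current vertex $u$ to destination $v$, repeated until $v$ is reached: Case 0: if $v$ is adjacent to $u$, move to $v$. Case 1: $u$ is an ancestor of $v$; let $X$ be the vertices of $C_{T^u}$ that are ancestors of $v$, $x$ the deepest; move to $x$, then to the child of $x$ that is an ancestor of $v$. Case 2: $u$ is a descendant of $v$; let $X$ be the vertices of $C_{T^u}$ that are descendants of $v$ and ancestors of $u$, $x$ the highest; move to $x$, then to the parent of $x$. Case 3: $u$ is neither; let $X$ be the vertices of $C_{T^u}$ that are ancestors of $v$ but not of $u$, and $Y$ those that are ancestors of $u$ but not of $v$, $y$ the highest vertex of $Y$. Case 3 a): $X=\emptyset$: move to $y$, then to the parent of $y$. Case 3 b): $X\neq\emptyset$: with $x$ the deepest vertex of $X$ and $x'$ the child of $x$ that is an ancestor of $v$, move to $x$, then to $x'$. (Moving to the current vertex means staying.) *)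

(* Defs.v *)
From mathcomp Require Import all_boot all_algebra.
Set Implicit Arguments. Unset Strict Implicit. Unset Printing Implicit Defensive.
Import GRing.Theory Num.Theory.

Section Routing.
(* The tree T: vertex set V (n = #|V|), root r, parent map par (par r = r). *)
Variable V : finType.
Variable r : V.
Variable par : V -> V.
(* c1 v = Some (c_1(v)) for non-leaf v, None for leaves. *)
Variable c1 : V -> option V.
Variable k : nat.

Definition anc (a b : V) : bool := [exists i : 'I_(#|V|).+1, iter i par b == a].
Definition child (c x : V) : bool := (c != r) && (par c == x).
Definition adj (x y : V) : bool := child x y || child y x.
Definition depth (x : V) : nat := #|[set a | anc a x]|.-1.
Definition sub (v : V) : {set V} := [set x | anc v x].

Definition rt (R : {set V}) : V :=
  odflt r [pick x in R | [forall y in R, depth x <= depth y]].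
(* next vertex on P_R(x), if any *)
Definition nextP (R : {set V}) (x : V) : option V :=
  match c1 x with Some c => if c \in R then Some c else None | None => None end.
Fixpoint lastPf (f : nat) (R : {set V}) (x : V) : V :=
  match f with 0 => x | f'.+1 =>
    match nextP R x with Some y => lastPf f' R y | None => x end end.
Definition lastP (R : {set V}) (x : V) : V := lastPf #|V| R x.
Definition lR (R : {set V}) : V := lastP R (rt R).
(* |R_{c_1(v)}| (0 if undefined or not in R) *)
Definition sizeLeft (R : {set V}) (v : V) : nat :=
  match c1 v with Some c => if c \in R then #|R :&: sub c| else 0 | None => 0 end.
Definition balanced (R : {set V}) (d : rat) (v : V) : bool :=
  ((sizeLeft R v)%:R <= (#|R|)%:R - d)%R.
Fixpoint bfirstf (f : nat) (R : {set V}) (d : rat) (x : V) : option V :=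
  if x \notin R then None else
  if balanced R d x then Some x else
  match f with 0 => None | f'.+1 =>
    match nextP R x with Some y => bfirstf f' R d y | None => None end end.
Definition bfirst (R : {set V}) (d : rat) (x : V) : option V := bfirstf #|V| R d x.
Fixpoint CVf (f : nat) (R : {set V}) (d : rat) : {set V} :=
  match f with 0 => set0 | f'.+1 =>
    match bfirst R d (rt R) with
    | None => set0
    | Some b => b |: \bigcup_(w | child w b && (w \in R)) CVf f' (R :&: sub w) d
    end end.
Definition CV (R : {set V}) (d : rat) : {set V} := CVf #|V|.+1 R d.
Definition CR (R : {set V}) : {set V} :=
  let m := #|R| in
  if ((m%:R / 2%:R - 1 : rat) <= k%:R)%R then R
  else CV R (m%:R / k%:R) :|: [set lR R; rt R].

Definition compo (X : {set V}) (x : V) : {set V} :=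
  [set y | (x \in X) && connect (fun a b => (b \in X) && adj a b) x y].
Definition canstep (R S : {set V}) : bool :=
  [exists x, (x \in R :\: CR R) && (S == compo (R :\: CR R) x)].
(* canonical subtrees: T, and recursively components of R minus C_R *)
Definition canonical (S : {set V}) : bool := connect canstep setT S.
Definition Tu (u : V) : option {set V} := [pick R | canonical R & u \in CR R].
Definition Cu (u : V) : {set V} :=
  match Tu u with Some R => CR R | None => set0 end.

Definition adjG (a b : V) : bool :=
  adj a b || ((a != b) && [exists R, canonical R && (a \in CR R) && (b \in CR R)]).

Definition deepest (X : {set V}) : option V :=
  [pick x in X | [forall y in X, depth y <= depth x]].
Definition highest (X : {set V}) : option V :=
  [pick x in X | [forall y in X, depth x <= depth y]].
Definition childTo (x v : V) : option V := [pick c | child c x && anc c v].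
Definition moveTo (u x : V) : seq V := if x == u then [::] else [:: x].

(* one iteration of the routing algorithm from u to v: list of the vertices
   reached, one per traversed edge *)
Definition step (u v : V) : seq V :=
  if u == v then [::] else
  if adjG u v then [:: v] else
  let C := Cu u in
  if anc u v then
    match deepest [set x in C | anc x v] with
    | Some x => match childTo x v with
                | Some x' => moveTo u x ++ [:: x'] | None => [::] end
    | None => [::] end
  else if anc v u then
    match highest [set x in C | anc v x && anc x u] with
    | Some x => moveTo u x ++ [:: par x]
    | None => [::] end
  else
    let X := [set x in C | anc x v && ~~ anc x u] in
    let Y := [set x in C | anc x u && ~~ anc x v] in
    if X == set0 then
      match highest Y with
      | Some y => moveTo u y ++ [:: par y] | None => [::] end
    else
      match deepest X with
      | Some x => match childTo x v with
                  | Some x' => moveTo u x ++ [:: x'] | None => [::] end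
      | None => [::] end.

Fixpoint walk (t : nat) (u v : V) : seq V :=
  match t with 0 => [::] | t'.+1 =>
    let s := step u v in s ++ walk t' (last u s) v end.

Definition rooted_tree : Prop :=
  par r = r /\ forall x, exists i, iter i par x = r.
Definition leftmost_spec : Prop :=
  forall v, (c1 v = None <-> forall w, ~~ child w v) /\
    forall c, c1 v = Some c ->
      child c v /\ forall w, child w v -> #|sub w| <= #|sub c|.
End Routing.

(* Main.v *)
Require Import Defs.
From mathcomp Require Import all_boot all_order all_algebra.
From mathcomp Require Import zify lra.
Set Implicit Arguments. Unset Strict Implicit. Unset Printing Implicit Defensive.
Import Order.TTheory GRing.Theory Num.Theory.

Section Tree.
Variable V : finType.
Variable r : V.
Variable par : V -> V.
Hypothesis Htree : rooted_tree r par.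

Local Notation anc := (anc par).
Local Notation child := (child r par).
Local Notation depth := (depth par).
Implicit Types (R S X : {set V}).

Lemma ancE a b : anc a b <-> exists i, iter i par b = a.
Proof.
split.
  by case/existsP => i /eqP <-; exists i.
case=> i; elim/ltn_ind: i => i IH Hiter.
case: (leqP i #|V|) => Hiv.
  by apply/existsP; exists (Ordinal (Hiv : i < #|V|.+1)); rewrite /= Hiter.
pose g := fun j : 'I_(#|V|.+1) => iter j par b.
have : ~~ injectiveb g.
  apply/negP => /injectiveP inj; have := @leq_card _ _ g inj.
  by rewrite card_ord ltnn.
case/injectivePn => j1 [j2 Hne Heq].
wlog Hlt : j1 j2 Hne Heq / j1 < j2.
  move=> W; case: (ltngtP j1 j2) => H; first exact: (W j1 j2).
  - by apply: (W j2 j1) => //; rewrite eq_sym.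
  - by move: Hne; rewrite -val_eqE /= H eqxx.
apply: (IH (i - (j2 - j1))); first by have := ltn_ord j2; lia.
have Hj2 : j2 <= i by have := ltn_ord j2; lia.
rewrite -Hiter.
have -> : i = (i - j2) + j2 by lia.
rewrite iterD.
have -> : i - j2 + j2 - (j2 - j1) = (i - j2) + j1 by have := ltn_ord j2; lia.
by rewrite iterD; congr iter; rewrite /g in Heq; rewrite Heq.
Qed.

Lemma anc_refl a : anc a a.
Proof. by apply/ancE; exists 0. Qed.

Lemma anc_trans a b c : anc a b -> anc b c -> anc a c.
Proof.
move=> /ancE [i Hi] /ancE [j Hj]; apply/ancE; exists (i + j).
by rewrite iterD Hj.
Qed.

Lemma iter_r i : iter i par r = r.
Proof. by case: Htree => Hr _; elim: i => //= i ->. Qed.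

Lemma anc_r x : anc r x.
Proof. by case: Htree => _ H; case: (H x) => i Hi; apply/ancE; exists i. Qed.

Lemma anc_par x : anc (par x) x.
Proof. by apply/ancE; exists 1. Qed.

Lemma anc_antisym a b : anc a b -> anc b a -> a = b.
Proof.
move=> /ancE [i Hi] /ancE [j Hj].
case: (posnP (i + j)) => Hij.
  have Hi0 : i = 0 by lia.
  by rewrite -Hi Hi0.
have Hper : forall m, iter (m * (i + j)) par b = b.
  elim=> [|m IH] //=; by rewrite mulSn iterD IH addnC iterD Hi Hj.
case: Htree => _ Hreach; case: (Hreach b) => m Hm.
have Hbr : b = r.
  rewrite -(Hper m).
  have -> : m * (i + j) = (m * (i + j) - m) + m by nia.
  by rewrite iterD Hm iter_r.
by rewrite -Hi Hbr iter_r.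
Qed.

Lemma anc_total a b x : anc a x -> anc b x -> anc a b \/ anc b a.
Proof.
move=> /ancE [i Hi] /ancE [j Hj].
case: (leqP i j) => H.
  right; apply/ancE; exists (j - i); by rewrite -Hi -Hj -iterD subnK.
left; apply/ancE; exists (i - j); by rewrite -Hi -Hj -iterD subnK // ltnW.
Qed.

Lemma anc_parI a c : anc a c -> a = c \/ anc a (par c).
Proof.
move=> /ancE [[|i] Hi]; first by left.
by right; apply/ancE; exists i; rewrite -iterSr.
Qed.

Lemma anc_parl a c : anc a (par c) -> anc a c.
Proof. by move=> H; apply: anc_trans H (anc_par c). Qed.

Lemma par_neq x : x != r -> par x != x.
Proof.
move=> Hx; apply/eqP => Hp.
case: Htree => _ H; case: (H x) => i Hi.
have : iter i par x = x by elim: i {Hi} => //= i ->.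
by rewrite Hi => Hrx; move: Hx; rewrite -Hrx eqxx.
Qed.

Lemma depth_lt a b : anc a b -> a != b -> depth a < depth b.
Proof.
move=> Hab Hne; rewrite /depth.
have Hsub : [set a' | anc a' a] \proper [set a' | anc a' b].
  apply/properP; split.
    by apply/subsetP => y; rewrite !inE => H; apply: anc_trans H Hab.
  exists b; rewrite !inE ?anc_refl //.
  by apply/negP => Hba; move: Hne; rewrite (anc_antisym Hab Hba) eqxx.
have := proper_card Hsub.
have : 0 < #|[set a' | anc a' a]| by apply/card_gt0P; exists a; rewrite inE anc_refl.
lia.
Qed.

Lemma depth_le a b : anc a b -> depth a <= depth b.
Proof.
move=> H; case: (eqVneq a b) => [->//|Hne]; exact: ltnW (depth_lt H Hne).
Qed.

Lemma depth_ltV x : depth x < #|V|.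
Proof.
rewrite /depth; have := max_card [set a | anc a x].
have : 0 < #|[set a' | anc a' x]| by apply/card_gt0P; exists x; rewrite inE anc_refl.
lia.
Qed.

Lemma child_par c x : child c x -> par c = x /\ c != r.
Proof. by case/andP => H1 /eqP H2. Qed.

Lemma child_anc c x : child c x -> anc x c /\ x != c.
Proof.
case/child_par => <- Hc; split; first exact: anc_par.
by rewrite eq_sym; apply/negP => /eqP H; move: (par_neq Hc); rewrite -H eqxx.
Qed.

Lemma child_depth c x : child c x -> depth x < depth c.
Proof. by case/child_anc => H1 H2; apply: depth_lt. Qed.

Lemma anc_child a c x : child c x -> anc a c -> a = c \/ anc a x.
Proof. by case/child_par => <- _; apply: anc_parI. Qed.

Lemma anc_strict_child x c : anc x c -> x != c -> c != r /\ anc x (par c).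
Proof.
move=> H Hne; case: (anc_parI H) => [E|]; first by rewrite E eqxx in Hne.
move=> Hp; split => //; apply/negP => /eqP Ec.
move: H Hp; rewrite Ec => H _.
by move: Hne; rewrite (anc_antisym H (anc_r x)) Ec eqxx.
Qed.

Lemma exists_child x v : anc x v -> x != v -> exists c, child c x /\ anc c v.
Proof.
elim/(@ltn_ind): {v}(depth v) {-2}v (erefl (depth v)) => N IH v Hd Hxv Hne.
case: (anc_strict_child Hxv Hne) => Hvr Hp.
case: (eqVneq x (par v)) => [E|Hne2].
  exists v; split; last exact: anc_refl.
  by rewrite /child Hvr E eqxx.
have Hd2 : depth (par v) < N.
  rewrite -Hd; apply: depth_lt; first exact: anc_par.
  exact: par_neq.
case: (IH _ Hd2 (par v) erefl Hp Hne2) => c [Hc Hcv].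
by exists c; split => //; apply: anc_parl.
Qed.

Lemma child_uniq x c c' v : child c x -> child c' x -> anc c v -> anc c' v -> c = c'.
Proof.
move=> Hc Hc' Hv Hv'.
wlog H : c c' Hc Hc' Hv Hv' / anc c c'.
  move=> W; case: (anc_total Hv Hv') => H; first exact: W.
  by symmetry; apply: W.
case: (anc_child Hc' H) => // Hcx.
case: (child_anc Hc) => Hxc Hne.
by move: Hne; rewrite (anc_antisym Hxc Hcx) eqxx.
Qed.

Lemma child_of_anc x a c : anc x a -> x != a -> child c x -> anc c a ->
  forall c', child c' x -> anc c' a -> c' = c.
Proof. by move=> _ _ Hc Ha c' Hc' Ha'; apply: (child_uniq Hc' Hc Ha' Ha). Qed.

Definition tsub (S : {set V}) (t : V) :=
  [/\ t \in S, (forall s, s \in S -> anc t s) & (forall s, s \in S -> s != t -> par s \in S)].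

Lemma tsub_conv S t s a : tsub S t -> s \in S -> anc t a -> anc a s -> a \in S.
Proof.
case=> Ht Hanc Hup.
elim/(@ltn_ind): {s}(depth s) {-2}s (erefl (depth s)) => N IH s Hd Hs Hta Has.
case: (eqVneq a s) => [->//|Hne].
case: (anc_strict_child Has Hne) => Hsr Hap.
have Hst : s != t.
  apply/negP => /eqP E; move: Hne; rewrite -E in Hta.
  by rewrite (anc_antisym Has Hta) eqxx.
apply: (IH (depth (par s))) => //; last exact: Hup.
rewrite -Hd; apply: depth_lt; [exact: anc_par | exact: par_neq].
Qed.

Lemma rt_top (S : {set V}) t : t \in S -> (forall s, s \in S -> anc t s) -> rt r par S = t.
Proof.
move=> Ht Hanc; rewrite /rt; case: pickP => [x /andP [Hx /forallP Hmin]|/(_ t)] /=.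
  have Hdx := Hmin t; rewrite Ht /= in Hdx.
  have Htx := Hanc x Hx.
  case: (eqVneq t x) => [->//|Hne].
  by have := depth_lt Htx Hne; rewrite ltnNge Hdx.
rewrite Ht /=; move/negbT/negP; case; apply/forallP => y; apply/implyP => Hy.
exact: depth_le (Hanc y Hy).
Qed.

Lemma rt_tsub S t : tsub S t -> rt r par S = t.
Proof. by case=> H1 H2 _; apply: rt_top. Qed.

Definition topP (X : {set V}) (x t : V) :=
  anc t x && [forall a, (anc t a && anc a x) ==> (a \in X)].

Definition topX (X : {set V}) (x : V) := [arg min_(t < x | topP X x t) depth t].

Lemma topX_spec (X : {set V}) x : x \in X ->
  [/\ anc (topX X x) x, (forall a, anc (topX X x) a -> anc a x -> a \in X)
   & (topX X x = r \/ par (topX X x) \notin X)].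
Proof.
move=> Hx.
have Px : topP X x x.
  rewrite /topP anc_refl /=; apply/forallP => a; apply/implyP => /andP [H1 H2].
  by rewrite -(anc_antisym H1 H2).
rewrite /topX; case: arg_minnP => // t /andP [Htx /forallP Hall] Hmin.
split => //.
  by move=> a H1 H2; have := Hall a; rewrite H1 H2.
case: (eqVneq t r) => [->|Htr]; [by left|right].
apply/negP => Hp.
have Pp : topP X x (par t).
  rewrite /topP (anc_trans (anc_par t) Htx) /=; apply/forallP => a; apply/implyP => /andP [H1 H2].
  case: (anc_total Htx H2) => Hta.
    by have := Hall a; rewrite Hta H2.
  case: (anc_parI Hta) => [->|Hap].
    by have := Hall t; rewrite anc_refl Htx.
  by rewrite -(anc_antisym H1 Hap).
have := Hmin _ Pp.
have := depth_lt (anc_par t) (par_neq Htr).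
lia.
Qed.

Lemma topX_uniq (X : {set V}) x t : x \in X -> anc t x -> (forall a, anc t a -> anc a x -> a \in X) ->
  (t = r \/ par t \notin X) -> topX X x = t.
Proof.
move=> Hx Htx Hall Htop.
case: (topX_spec Hx) => Hux Hall' Htop'.
move: (topX X x) Hux Hall' Htop' => u Hux Hall' Htop'.
wlog H : t u Htx Hall Htop Hux Hall' Htop' / anc t u.
  move=> W; case: (anc_total Htx Hux) => H; first exact: W.
  by symmetry; apply: W.
case: (eqVneq t u) => [->//|Hne].
case: (anc_strict_child H Hne) => Hur Hp.
case: Htop' => [E|]; first by rewrite E eqxx in Hur.
by rewrite (Hall _ Hp (anc_trans (anc_par u) Hux)).
Qed.

Lemma topX_child (X : {set V}) a b : a \in X -> b \in X -> child b a -> topX X b = topX X a.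
Proof.
move=> Ha Hb Hba.
case: (topX_spec Ha) => H1 H2 H3.
case: (child_par Hba) => Hpa Hbr.
apply: topX_uniq => //.
- by apply: anc_trans H1 _; rewrite -Hpa; apply: anc_par.
- move=> y Hy Hyb; case: (anc_child Hba Hyb) => [->//|]; exact: H2.
Qed.

Definition erel (X : {set V}) := fun a b : V => (b \in X) && adj r par a b.

Lemma conn_up (X : {set V}) z a : anc a z -> (forall b, anc a b -> anc b z -> b \in X) -> connect (erel X) z a.
Proof.
elim/(@ltn_ind): {z}(depth z) {-2}z (erefl (depth z)) => N IH z Hd Haz Hall.
case: (eqVneq a z) => [->|Hne]; first exact: connect0.
case: (anc_strict_child Haz Hne) => Hzr Hp.
apply: (connect_trans (y := par z)).
  apply: connect1; rewrite /erel (Hall _ Hp (anc_par z)) /adj /child Hzr eqxx //.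
apply: (IH (depth (par z))) => //.
- by rewrite -Hd; apply: depth_lt; [exact: anc_par | exact: par_neq].
- by move=> b H1 H2; apply: Hall => //; apply: anc_parl.
Qed.

Lemma conn_down (X : {set V}) a y : anc a y -> (forall b, anc a b -> anc b y -> b \in X) -> connect (erel X) a y.
Proof.
elim/(@ltn_ind): {y}(depth y) {-2}y (erefl (depth y)) => N IH y Hd Hay Hall.
case: (eqVneq a y) => [->|Hne]; first exact: connect0.
case: (anc_strict_child Hay Hne) => Hyr Hp.
apply: (connect_trans (y := par y)).
  apply: (IH (depth (par y))) => //.
  - by rewrite -Hd; apply: depth_lt; [exact: anc_par | exact: par_neq].
  - by move=> b H1 H2; apply: Hall => //; apply: anc_parl.
apply: connect1; rewrite /erel (Hall _ Hay (anc_refl y)) /adj /child Hyr eqxx orbT //.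
Qed.

Lemma compoE X x y : (y \in compo r par X x) = [&& x \in X, y \in X & topX X y == topX X x].
Proof.
rewrite /compo inE.
case Hx: (x \in X) => //=.
apply/idP/idP.
  case/connectP => p; elim: p x Hx => [|z p IH] x Hx /=.
    by move=> _ ->; rewrite Hx eqxx.
  case/andP => /andP [Hz Hadj] Hpath Hy.
  have := IH z Hz Hpath Hy; case/andP => -> /eqP ->.
  apply/eqP; case/orP: Hadj => Hc; first by rewrite (topX_child Hz Hx Hc).
  by rewrite (topX_child Hx Hz Hc).
case/andP => Hy /eqP Htop.
case: (topX_spec Hx) => H1 H2 H3.
case: (topX_spec Hy) => H1' H2' H3'.
apply: (connect_trans (y := topX X x)); first exact: conn_up.
by apply: conn_down; rewrite -Htop.
Qed.

Lemma compo_sub (X : {set V}) x : compo r par X x \subset X.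
Proof. by apply/subsetP => y; rewrite compoE => /and3P []. Qed.

Lemma compo_self (X : {set V}) x : x \in X -> x \in compo r par X x.
Proof. by move=> Hx; rewrite compoE Hx eqxx. Qed.

Lemma compo_same (X : {set V}) x y : y \in compo r par X x -> compo r par X y = compo r par X x.
Proof.
rewrite compoE => /and3P [Hx Hy /eqP E]; apply/setP => z.
by rewrite !compoE Hx Hy E.
Qed.

Lemma compo_adj (X : {set V}) x y z : y \in compo r par X x -> z \in X -> adj r par y z ->
  z \in compo r par X x.
Proof.
rewrite !compoE => /and3P [Hx Hy /eqP E] Hz Hadj; rewrite Hx Hz /= -E.
by case/orP: Hadj => Hc; [rewrite (topX_child Hz Hy Hc) | rewrite (topX_child Hy Hz Hc)].
Qed.

Lemma compo_tsub (X : {set V}) x : x \in X -> tsub (compo r par X x) (topX X x).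
Proof.
move=> Hx; case: (topX_spec Hx) => H1 H2 H3.
have Ht : topX X x \in X by apply: H2 => //; apply: anc_refl.
have Htt : topX X (topX X x) = topX X x.
  apply: topX_uniq => //; first exact: anc_refl.
  move=> a Ha1 Ha2; rewrite (anc_antisym Ha2 Ha1); exact: Ht.
split.
- by rewrite compoE Hx Ht Htt eqxx.
- move=> s; rewrite compoE => /and3P [_ Hs /eqP <-].
  by case: (topX_spec Hs).
- move=> s; rewrite compoE => /and3P [_ Hs /eqP E] Hne.
  case: (topX_spec Hs); rewrite E => Ha Hb Hc.
  case: (anc_strict_child Ha); first by rewrite eq_sym.
  move=> Hsr Hp.
  have Hps : par s \in X by apply: Hb => //; apply: anc_par.
  rewrite compoE Hx Hps /= -E; apply/eqP; symmetry; apply: topX_child => //.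
  by rewrite /child Hsr eqxx.
Qed.

Variable c1 : V -> option V.
Hypothesis Hleft : leftmost_spec r par c1.

Lemma c1_child v c : c1 v = Some c -> child c v.
Proof. by move=> H; case: (Hleft v) => _ /(_ c H) []. Qed.

Lemma nextP_spec (R : {set V}) x y : nextP c1 R x = Some y -> [/\ c1 x = Some y, y \in R & child y x].
Proof.
rewrite /nextP; case E: (c1 x) => [c|] //; case: ifP => // Hc [<-].
by split => //; apply: c1_child.
Qed.

Lemma nextP_None_size (R : {set V}) x : nextP c1 R x = None -> sizeLeft par c1 R x = 0.
Proof. by rewrite /nextP /sizeLeft; case: (c1 x) => // c; case: ifP. Qed.

Inductive lpath (R : {set V}) : V -> V -> Prop :=
| lp0 x : lpath R x x
| lpS x y z : nextP c1 R x = Some y -> lpath R y z -> lpath R x z.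

Lemma lpath_anc R x z : lpath R x z -> anc x z.
Proof.
elim=> [y|x' y z' Hn _ IH]; first exact: anc_refl.
case: (nextP_spec Hn) => _ _ /child_par [<- _].
exact: anc_trans (anc_par y) IH.
Qed.

Lemma lpath_in R x z : lpath R x z -> x \in R -> z \in R.
Proof. by elim=> // x' y z' Hn _ IH _; apply: IH; case: (nextP_spec Hn). Qed.

Lemma lpath_c1 R x b : lpath R x b -> forall a a', anc x a -> child a' a -> anc a' b ->
  c1 a = Some a' /\ a' \in R.
Proof.
elim=> [y|x' y z Hn Hp IH] a a' Hxa Hc Hab.
  case: (child_anc Hc) => H1 H2.
  by move: H2; rewrite (anc_antisym H1 (anc_trans Hab Hxa)) eqxx.
case: (nextP_spec Hn) => Hc1 Hy Hyc.
have Hyz := lpath_anc Hp.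
case: (eqVneq x' a) => [E|Hne].
  rewrite -E in Hc *; have E2 := child_uniq Hc Hyc Hab Hyz.
  by rewrite E2.
apply: IH => //.
case: (exists_child Hxa Hne) => c [Hcc Hca].
have Hcz : anc c z.
  apply: anc_trans Hca _; apply: anc_trans Hab.
  by case: (child_anc Hc).
by rewrite -(child_uniq Hcc Hyc Hcz Hyz).
Qed.

Lemma lpath_build R x z : anc x z ->
  (forall a a', anc x a -> child a' a -> anc a' z -> c1 a = Some a' /\ a' \in R) -> lpath R x z.
Proof.
elim/(@ltn_ind): {x}(#|V| - depth x) {-2}x (erefl (#|V| - depth x)) => N IH x Hd Hxz Hall.
case: (eqVneq x z) => [->|Hne]; first exact: lp0.
case: (exists_child Hxz Hne) => c [Hc Hcz].
case: (Hall x c (anc_refl x) Hc Hcz) => Hc1 HcR.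
apply: (@lpS _ _ c); first by rewrite /nextP Hc1 HcR.
apply: (IH (#|V| - depth c)) => //.
  have := child_depth Hc; have := depth_ltV c; lia.
move=> a a' Hca Ha Ha'; apply: Hall => //.
by apply: anc_trans Hca; case: (child_anc Hc).
Qed.

Lemma lastPf_lpath f R x : lpath R x (lastPf c1 f R x).
Proof.
elim: f x => [|f IH] x /=; first exact: lp0.
case E: (nextP c1 R x) => [y|]; last exact: lp0.
exact: lpS E (IH y).
Qed.

Lemma lastPf_eq R x z f : lpath R x z -> nextP c1 R z = None ->
  depth z <= f + depth x -> lastPf c1 f R x = z.
Proof.
move=> Hp; elim: Hp f => [y|x' y z' Hn Hp IH] f Hnone Hd.
  by case: f {Hd} => //= f; rewrite Hnone.
case: (nextP_spec Hn) => _ _ Hyc.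
have Hdy := child_depth Hyc.
have Hyz := depth_le (lpath_anc Hp).
case: f Hd => [|f] Hd /=; first lia.
rewrite Hn; apply: IH => //; lia.
Qed.

Lemma lastP_in R x : x \in R -> Defs.lastP c1 R x \in R.
Proof. by move=> Hx; apply: lpath_in (lastPf_lpath _ _ _) Hx. Qed.

Lemma bfirstf_Some f R d x b : bfirstf par c1 f R d x = Some b ->
  [/\ x \in R, lpath R x b, balanced par c1 R d b &
     forall a, anc x a -> anc a b -> a != b -> ~~ balanced par c1 R d a].
Proof.
elim: f x => [|f IH] x /=.
  case: ifP => // /negbFE Hx; case: ifP => // Hb [<-]; split => //.
    exact: lp0.
  by move=> a H1 H2; rewrite (anc_antisym H1 H2) eqxx.
case: ifP => // /negbFE Hx; case: ifP => Hb.
  case=> <-; split => //; first exact: lp0.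
  by move=> a H1 H2; rewrite (anc_antisym H1 H2) eqxx.
case E: (nextP c1 R x) => [y|] // /IH [Hy Hp Hbal Hnb].
case: (nextP_spec E) => _ _ Hyc.
split => //; first exact: lpS E Hp.
move=> a Hxa Hab Hne.
case: (eqVneq x a) => [<-|Hxa']; first by rewrite Hb.
apply: Hnb => //.
case: (exists_child Hxa Hxa') => c [Hcc Hca].
by rewrite -(child_uniq Hcc Hyc (anc_trans Hca Hab) (lpath_anc Hp)).
Qed.

Lemma bfirstf_None f R d x : bfirstf par c1 f R d x = None -> x \in R ->
  #|V| <= f + depth x + 1 ->
  exists e, [/\ lpath R x e, nextP c1 R e = None & ~~ balanced par c1 R d e].
Proof.
elim: f x => [|f IH] x /=; rewrite ?inE.
  move=> + Hx; rewrite Hx /=; case: ifP => // Hb _ Hd.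
  exists x; split; [exact: lp0| |by rewrite Hb].
  case E: (nextP c1 R x) => [y|] //.
  case: (nextP_spec E) => _ _ Hyc.
  move: (child_depth Hyc) (depth_ltV y) => H1 H2; set n := #|V| in Hd H2; lia.
move=> + Hx; rewrite Hx /=; case: ifP => // Hb.
case E: (nextP c1 R x) => [y|] Hn Hd.
  case: (nextP_spec E) => _ Hy Hyc.
  have := child_depth Hyc => Hdy.
  have Hd2 : #|V| <= f + depth y + 1 by move: Hd; set n := #|V|; lia.
  case: (IH y Hn Hy Hd2) => e [Hp He Hbe].
  by exists e; split => //; apply: lpS E Hp.
by exists x; split => //; [exact: lp0 | rewrite Hb].
Qed.

Lemma tsub_subw R w w' : tsub R w -> w' \in R -> tsub (R :&: sub par w') w'.
Proof.
case=> Hw Hanc Hup Hw'; split.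
- by rewrite inE Hw' inE anc_refl.
- by move=> s; rewrite !inE => /andP [].
- move=> s; rewrite !inE => /andP [Hs Hws] Hne.
  case: (anc_strict_child Hws); first by rewrite eq_sym.
  move=> Hsr Hp; rewrite Hp andbT; apply: Hup => //.
  apply/negP => /eqP E; rewrite E in Hws.
  by move: Hne; rewrite E (anc_antisym (Hanc _ Hw') Hws) eqxx.
Qed.

Lemma CVfS f R d : CVf r par c1 f.+1 R d =
  match bfirst par c1 R d (rt r par R) with
  | None => set0
  | Some b => b |: \bigcup_(w | child w b && (w \in R)) CVf r par c1 f (R :&: sub par w) d
  end.
Proof. by []. Qed.

Lemma CVf_sub f R d : CVf r par c1 f R d \subset R.
Proof.
elim: f R => [|f IH] R; first exact: sub0set.
rewrite CVfS.
case E: (bfirst par c1 R d (rt r par R)) => [b|]; last exact: sub0set.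
case: (bfirstf_Some E) => Hx Hp _ _.
rewrite subUset sub1set (lpath_in Hp Hx) /=.
apply/bigcupsP => w' _; apply: subset_trans (IH _) _.
exact: subsetIl.
Qed.

Lemma CV_small f R w (d : rat) S t : tsub R w -> #|R| < f -> tsub S t ->
  S \subset R :\: CVf r par c1 f R d -> (#|S|%:R < d)%R.
Proof.
elim: f R w S t => [|f IH] R w S t HR Hf HS HSR //.
have Hrt := rt_tsub HR.
have HSsub : S \subset R by apply: subset_trans HSR (subsetDl _ _).
have HSle : #|S| <= #|R| by apply: subset_leq_card.
case: (HS) => Ht HSanc HSup.
have HtR : t \in R by apply: (subsetP HSsub).
move: HSR; rewrite CVfS Hrt.
case E: (bfirst par c1 R d w) => [b|] HSR; last first.
  case: HR => Hw _ _.
  have Hd : #|V| <= #|V| + depth w + 1 by lia.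
  case: (bfirstf_None E Hw Hd) => e [_ He Hbe].
  move: Hbe; rewrite /balanced (nextP_None_size He) -ltNge => Hlt.
  have : (#|S|%:R <= #|R|%:R :> rat)%R by rewrite ler_nat.
  lra.
case: (bfirstf_Some E) => Hw Hp Hbal Hnb.
have HbR := lpath_in Hp Hw.
have Hwb := lpath_anc Hp.
have HbCV : b \in b |: \bigcup_(w0 | child w0 b && (w0 \in R)) CVf r par c1 f (R :&: sub par w0) d.
  by rewrite setU11.
have HnCV : forall s, s \in S -> s \notin b |: \bigcup_(w0 | child w0 b && (w0 \in R)) CVf r par c1 f (R :&: sub par w0) d.
  by move=> s Hs; have := subsetP HSR s Hs; rewrite inE => /andP [].
have Htb : t != b by apply/negP => /eqP E1; move: (HnCV t Ht); rewrite E1 HbCV.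
case Hbt: (anc b t).
  case: (exists_child Hbt (negbT (introF eqP (fun E1 => (negP Htb) (introT eqP (esym E1)))))) => w' [Hw'c Hw't].
  case: (child_anc Hw'c) => Hbw' Hbw'ne.
  have Hw'R : w' \in R by apply: tsub_conv HR HtR (anc_trans Hwb Hbw') Hw't.
  have HR' := tsub_subw HR Hw'R.
  have Hcard : #|R :&: sub par w'| < #|R|.
    apply: proper_card; apply/properP; split; first exact: subsetIl.
    exists b => //; rewrite !inE HbR /=; apply/negP => Hw'b.
    by move: Hbw'ne; rewrite (anc_antisym Hbw' Hw'b) eqxx.
  have Hf' : #|R :&: sub par w'| < f by apply: leq_trans Hcard _; rewrite -ltnS.
  apply: (IH _ w' S t HR' Hf' HS).
  apply/subsetP => s Hs; rewrite !inE (subsetP HSsub s Hs) (anc_trans Hw't (HSanc s Hs)) /= !andbT.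
  apply/negP => Hsin; move: (HnCV s Hs); rewrite in_setU negb_or => /andP [_ /negP]; apply.
  apply/bigcupP; exists w' => //; by rewrite Hw'c Hw'R.
have HSb : forall s, s \in S -> ~~ anc b s.
  move=> s Hs; apply/negP => Hbs.
  case: (anc_total Hbs (HSanc s Hs)) => Hbt'; first by rewrite Hbt' in Hbt.
  by move: (HnCV b (tsub_conv HS Hs Hbt' Hbs)); rewrite HbCV.
have Hwb' : w != b.
  apply/negP => /eqP E1; case: HR => _ Hanc _.
  by move: Hbt; rewrite -E1 (Hanc t HtR).
case: (anc_strict_child Hwb Hwb') => Hbr Hwp.
have Hbp : child b (par b) by rewrite /child Hbr eqxx.
have Hnbp := Hnb (par b) Hwp (anc_par b) (par_neq Hbr).
case: (lpath_c1 Hp Hwp Hbp (anc_refl b)) => Hc1 _.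
move: Hnbp; rewrite /balanced /sizeLeft Hc1 HbR -ltNge => Hlt.
have HS2 : S \subset R :\: sub par b.
  apply/subsetP => s Hs; rewrite !inE (subsetP HSsub s Hs) andbT.
  exact: HSb.
have := subset_leq_card HS2; rewrite cardsD => Hc.
have Hc2 : #|R :&: sub par b| <= #|R| by apply: subset_leq_card; apply: subsetIl.
have : (#|S|%:R + #|R :&: sub par b|%:R <= #|R|%:R :> rat)%R.
  by rewrite -natrD ler_nat; clear -Hc Hc2; lia.
lra.
Qed.

Lemma CV_heavy f R w d a a' y : tsub R w -> a \in R -> a \notin CVf r par c1 f R d ->
  child a' a -> y \in CVf r par c1 f R d -> anc a' y -> c1 a = Some a'.
Proof.
elim: f R w => [|f IH] R w HR Ha HaCV Hc Hy Hay; first by rewrite inE in Hy.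
have Hrt := rt_tsub HR.
move: HaCV Hy; rewrite CVfS Hrt.
case E: (bfirst par c1 R d w) => [b|]; last by move=> _; rewrite inE.
case: (bfirstf_Some E) => Hw Hp Hbal Hnb.
move=> HaCV Hy.
have Hab : a != b by apply/negP => /eqP E1; move: HaCV; rewrite E1 setU11.
have Hby : anc b y.
  move: Hy; rewrite in_setU1 => /orP [/eqP ->|]; first exact: anc_refl.
  case/bigcupP => w2 /andP [Hw2c Hw2R] Hy2.
  have := subsetP (CVf_sub _ _ _) _ Hy2; rewrite !inE => /andP [_ Hw2y].
  by apply: anc_trans Hw2y; case: (child_anc Hw2c).
case Hba: (anc b a).
  case: (exists_child Hba (negbT (introF eqP (fun E1 => (negP Hab) (introT eqP (esym E1)))))) => w3 [Hw3c Hw3a].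
  case: (child_anc Hw3c) => Hbw3 Hbw3ne.
  case: HR => Hw0 Hanc Hup.
  have Hw3R : w3 \in R by apply: tsub_conv (And3 Hw0 Hanc Hup) Ha (anc_trans (Hanc _ Hw) (anc_trans (lpath_anc Hp) Hbw3)) Hw3a.
  have Haa' : anc a a' by case: (child_anc Hc).
  have Hyb : y != b.
    apply/negP => /eqP E1; rewrite E1 in Hay.
    have E2 := anc_antisym Hay (anc_trans Hba Haa').
    rewrite E2 in Haa'.
    by move: Hab; rewrite (anc_antisym Haa' Hba) eqxx.
  move: Hy; rewrite in_setU1 (negbTE Hyb) /= => /bigcupP [w2 /andP [Hw2c Hw2R] Hy2].
  have := subsetP (CVf_sub _ _ _) _ Hy2; rewrite !inE => /andP [_ Hw2y].
  have E3 : w2 = w3 by apply: (child_uniq Hw2c Hw3c Hw2y (anc_trans Hw3a (anc_trans Haa' Hay))).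
  rewrite E3 in Hy2.
  apply: (IH (R :&: sub par w3) w3) => //.
  - exact: tsub_subw (And3 Hw0 Hanc Hup) Hw3R.
  - by rewrite !inE Ha Hw3a.
  - apply/negP => Hin; move: HaCV; rewrite in_setU negb_or => /andP [_ /negP]; apply.
    by apply/bigcupP; exists w3 => //; rewrite Hw3c Hw3R.
have Ha'b : anc a' b.
  case: (anc_total Hay Hby) => // Hba'.
  case: (anc_child Hc Hba') => [->|H]; first exact: anc_refl.
  by rewrite H in Hba.
case: HR => _ Hanc _.
by case: (lpath_c1 Hp (Hanc _ Ha) Hc Ha'b).
Qed.

Variable k : nat.
Hypothesis Hk : 4 <= k.

Local Notation CR := (CR r par c1 k).
Local Notation lR := (lR r par c1).
Local Notation rt := (rt r par).
Local Notation compo := (compo r par).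

Lemma CR_small R : (#|R|%:R / 2%:R - 1 <= k%:R :> rat)%R -> CR R = R.
Proof. by rewrite /Defs.CR => ->. Qed.

Lemma CR_large R : ~~ (#|R|%:R / 2%:R - 1 <= k%:R :> rat)%R ->
  CR R = CV r par c1 R (#|R|%:R / k%:R) :|: [set lR R; rt R].
Proof. by rewrite /Defs.CR => /negbTE ->. Qed.

Lemma lR_in R w : tsub R w -> lR R \in R.
Proof.
move=> HR; rewrite /Defs.lR (rt_tsub HR); apply: lastP_in; by case: HR.
Qed.

Lemma rt_CR R w : tsub R w -> w \in CR R.
Proof.
move=> HR; rewrite /Defs.CR; case: ifP => _; first by case: HR.
by rewrite !inE (rt_tsub HR) eqxx !orbT.
Qed.

Lemma lR_CR R w : tsub R w -> lR R \in CR R.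
Proof.
move=> HR; rewrite /Defs.CR; case: ifP => _; first exact: lR_in HR.
by rewrite !inE eqxx !orbT.
Qed.

Lemma CR_sub R w : tsub R w -> CR R \subset R.
Proof.
move=> HR; rewrite /Defs.CR; case: ifP => _; first exact: subxx.
rewrite subUset CVf_sub /= subUset !sub1set (lR_in HR) (rt_tsub HR) /=.
by case: HR.
Qed.

Lemma CR_comp R w x : tsub R w -> x \in R :\: CR R ->
  k * #|compo (R :\: CR R) x| < #|R|.
Proof.
move=> HR Hx.
case Hs: (#|R|%:R / 2%:R - 1 <= k%:R :> rat)%R.
  by move: Hx; rewrite (CR_small Hs) setDv inE.
rewrite (CR_large (negbT Hs)) in Hx *.
have HK := compo_tsub Hx.
have Hsub : compo (R :\: (CV r par c1 R (#|R|%:R / k%:R) :|: [set lR R; rt R])) x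
   \subset R :\: CVf r par c1 #|V|.+1 R (#|R|%:R / k%:R).
  apply: subset_trans (compo_sub _ _) _.
  apply/subsetP => y; rewrite !in_setD in_setU negb_or => /andP [/andP [H1 _] H2].
  by rewrite H2 andbT; exact: H1.
have Hf : #|R| < #|V|.+1 by rewrite ltnS max_card.
have := CV_small HR Hf HK Hsub.
have Hk0 : (0 < k%:R :> rat)%R by rewrite ltr0n; lia.
rewrite ltr_pdivlMr // -natrM ltr_nat mulnC //.
Qed.

Lemma CR_heavy R w a a' y : tsub R w -> a \in R :\: CR R -> child a' a -> a' \in R ->
  y \in CR R -> anc a' y -> c1 a = Some a'.
Proof.
move=> HR Ha Hc Ha' Hy Hay.
case Hs: (#|R|%:R / 2%:R - 1 <= k%:R :> rat)%R.
  by move: Ha; rewrite (CR_small Hs) setDv inE.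
rewrite (CR_large (negbT Hs)) in Ha Hy.
move: Ha; rewrite in_setD in_setU negb_or => /andP [/andP [HaCV _] HaR].
move: Hy; rewrite in_setU => /orP [Hy|].
  exact: CV_heavy HR HaR HaCV Hc Hy Hay.
rewrite !inE => /orP [/eqP Ey|/eqP Ey].
  have Hp : lpath R w (lR R).
    by rewrite /Defs.lR (rt_tsub HR); exact: lastPf_lpath.
  case: HR => _ Hanc _.
  rewrite Ey in Hay.
  by case: (lpath_c1 Hp (Hanc _ HaR) Hc Hay).
rewrite Ey (rt_tsub HR) in Hay.
case: HR => _ Hanc _.
have E1 := anc_antisym Hay (Hanc _ Ha').
case: (child_anc Hc) => Haa' Hne.
have E2 := anc_antisym (Hanc _ HaR) (anc_trans Haa' Hay).
by move: Hne; rewrite -E2 E1 eqxx.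
Qed.

Inductive canon : {set V} -> Prop :=
| canT : canon setT
| canS Q x : canon Q -> x \in Q :\: CR Q -> canon (compo (Q :\: CR Q) x).

Lemma canon_tsub R : canon R -> tsub R (rt R).
Proof.
have HT : tsub setT r.
  by split; [exact: in_setT | move=> s _; exact: anc_r | move=> s _ _; exact: in_setT].
case=> [|Q x _ Hx]; first by rewrite (rt_tsub HT).
by have H := compo_tsub Hx; rewrite (rt_tsub H).
Qed.

Lemma canonicalP R : canonical r par c1 k R <-> canon R.
Proof.
split.
  case/connectP => p Hp ->; elim/last_ind: p Hp => [|p y IH] /=; first by move=> _; exact: canT.
  rewrite rcons_path => /andP [Hp /existsP [x /andP [Hx /eqP ->]]].
  rewrite last_rcons; exact: canS (IH Hp) Hx.
elim=> [|Q x _ IH Hx]; first exact: connect0.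
apply: connect_trans IH (connect1 _).
by apply/existsP; exists x; rewrite Hx eqxx.
Qed.

Inductive desc : {set V} -> {set V} -> Prop :=
| desc0 R : desc R R
| descS R x S : x \in R :\: CR R -> desc (compo (R :\: CR R) x) S -> desc R S.

Lemma desc_last R Q x : desc R Q -> x \in Q :\: CR Q -> desc R (compo (Q :\: CR Q) x).
Proof.
elim=> [R0 Hx|R0 y S Hy _ IH Hx]; first exact: descS Hx (desc0 _).
exact: descS Hy (IH Hx).
Qed.

Lemma canon_desc R : canon R -> desc setT R.
Proof. elim=> [|Q x _ IH Hx]; [exact: desc0 | exact: desc_last]. Qed.

Lemma desc_sub R S : desc R S -> S \subset R.
Proof.
elim=> [R0|R0 x S0 Hx _ IH]; first exact: subxx.
apply: subset_trans IH _; apply: subset_trans (compo_sub _ _) _; exact: subsetDl.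
Qed.

Lemma desc_strict R S : desc R S -> S <> R -> S \subset R :\: CR R.
Proof.
case=> [R0 //|R0 x S0 Hx HS _].
by apply: subset_trans (desc_sub HS) _; exact: compo_sub.
Qed.

Lemma canon_cmp R S w : canon R -> canon S -> w \in R -> w \in S -> desc R S \/ desc S R.
Proof.
move=> HR HS; elim: HS R HR => [|Q x HQ IH Hx] R HR HwR HwS.
  by right; apply: canon_desc.
have HwQ : w \in Q.
  have := subsetP (compo_sub _ _) _ HwS; rewrite inE => /andP [_ ->] //.
case: (IH R HR HwR HwQ) => H.
  by left; apply: desc_last.
move: H HwR HwS Hx {IH HQ HwQ HR}; case=> [R0|R0 y S0 Hy HS0] HwR HwS Hx.
  by left; apply: descS Hx (desc0 _).
right.
have Hw1 : w \in compo (R0 :\: CR R0) y by apply: (subsetP (desc_sub HS0)).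
have E : compo (R0 :\: CR R0) y = compo (R0 :\: CR R0) x.
  by rewrite -(compo_same Hw1) (compo_same HwS).
by rewrite -E.
Qed.

Lemma canon_uniq R S w : canon R -> canon S -> w \in CR R -> w \in CR S -> R = S.
Proof.
move=> HR HS HwR HwS.
have HwR' := subsetP (CR_sub (canon_tsub HR)) _ HwR.
have HwS' := subsetP (CR_sub (canon_tsub HS)) _ HwS.
case: (canon_cmp HR HS HwR' HwS') => H.
  case: (eqVneq S R) => [//|Hne].
  have := subsetP (desc_strict H (elimN eqP Hne)) _ HwS'.
  by rewrite inE HwR.
case: (eqVneq R S) => [//|Hne].
have := subsetP (desc_strict H (elimN eqP Hne)) _ HwR'.
by rewrite inE HwS.
Qed.

Lemma canon_cover w : exists R, canon R /\ w \in CR R.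
Proof.
suff : forall n R, #|R| <= n -> canon R -> w \in R -> exists R, canon R /\ w \in CR R.
  by move=> /(_ #|V| setT (max_card _) canT (in_setT w)).
elim=> [|n IH] R Hn HR Hw.
  by move: Hn; rewrite leqn0 cards_eq0 => /eqP E; rewrite E inE in Hw.
case Hc: (w \in CR R); first by exists R.
have HwX : w \in R :\: CR R by rewrite inE Hc Hw.
apply: (IH (compo (R :\: CR R) w)).
- have := CR_comp (canon_tsub HR) HwX.
  move: Hn; set a := #|R|; set b := #|compo _ _|.
  move=> H1 H2; clear -H1 H2 Hk; nia.
- exact: canS HR HwX.
- exact: compo_self.
Qed.

Lemma canon_parent R : canon R -> R <> setT ->
  exists Q x, [/\ canon Q, x \in Q :\: CR Q & R = compo (Q :\: CR Q) x].
Proof. by case=> [|Q x HQ Hx] H; [case: (H erefl) | exists Q, x]. Qed.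

Lemma Pgen R z y : canon R -> z \in R -> child y z -> y \notin R -> z = lR R.
Proof.
move=> HR; elim: HR z y => [|Q x HQ IH Hx] z y; first by move=> _ _; rewrite inE.
move=> Hz Hc Hy.
have HQt := canon_tsub HQ.
set R0 := compo (Q :\: CR Q) x in Hz Hy *.
have HRt := compo_tsub Hx.
have HRsub : R0 \subset Q :\: CR Q := compo_sub _ _.
have HzX := subsetP HRsub _ Hz.
have HzQ : z \in Q by move: HzX; rewrite inE => /andP [].
case HyQ: (y \in Q); last first.
  have E := IH z y HzQ Hc (negbT HyQ).
  by move: HzX; rewrite inE E (lR_CR HQt).
have HyC : y \in CR Q.
  apply/negPn/negP => Hn.
  have : y \in R0.
    apply: compo_adj Hz _ _; first by rewrite inE Hn HyQ.
    by rewrite /adj Hc orbT.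
  by rewrite (negbTE Hy).
set t := topX (Q :\: CR Q) x in HRt.
have Hrt : rt R0 = t := rt_tsub HRt.
have Hzy : anc z y by case: (child_anc Hc).
have Hpath : lpath R0 t z.
  apply: lpath_build; first by case: HRt => _ H _; apply: H.
  move=> a a' Hta Haa' Ha'z.
  have Haz : anc a z by apply: anc_trans Ha'z; case: (child_anc Haa').
  have HaR : a \in R0 by apply: tsub_conv HRt Hz Hta Haz.
  have Ha'R0 : a' \in R0.
    apply: tsub_conv HRt Hz _ Ha'z; apply: anc_trans Hta _; by case: (child_anc Haa').
  split => //.
  apply: (CR_heavy (y := y) HQt (subsetP HRsub _ HaR) Haa' _ HyC).
    by move: (subsetP HRsub _ Ha'R0); rewrite inE => /andP [].
  exact: anc_trans Ha'z Hzy.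
have Hc1 : c1 z = Some y.
  by apply: (CR_heavy HQt HzX Hc HyQ HyC (anc_refl y)).
have Hnext : nextP c1 R0 z = None by rewrite /nextP Hc1 (negbTE Hy).
rewrite /Defs.lR /Defs.lastP Hrt; symmetry; apply: lastPf_eq => //.
move: (depth_ltV z); set n := #|V|; lia.
Qed.

Local Notation adjG := (adjG r par c1 k).
Local Notation step := (step r par c1 k).
Local Notation walk := (walk r par c1 k).

Lemma Cu_eq R w : canon R -> w \in CR R -> Cu r par c1 k w = CR R.
Proof.
move=> HR Hw; rewrite /Cu /Tu; case: pickP => [R' /andP [HR' Hw']|H].
  by rewrite (canon_uniq (proj1 (canonicalP R') HR') HR Hw' Hw).
by move: (H R); rewrite Hw andbT (proj2 (canonicalP R) HR).
Qed.

Lemma adjG_CR R a b : canon R -> a \in CR R -> b \in CR R -> a != b -> adjG a b.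
Proof.
move=> HR Ha Hb Hne; rewrite /Defs.adjG; apply/orP; right; rewrite Hne /=.
by apply/existsP; exists R; rewrite Ha Hb !andbT (proj2 (canonicalP R) HR).
Qed.

Lemma deepestP X x0 : x0 \in X ->
  exists x, [/\ deepest par X = Some x, x \in X & forall y, y \in X -> depth y <= depth x].
Proof.
move=> Hx0; rewrite /deepest; case: pickP => [x /andP [Hx /forallP H]|H].
  exists x; split => // y Hy; by have := H y; rewrite Hy.
case: (@arg_maxnP _ x0 (mem X) depth Hx0) => m Hm Hmax.
have HmX : m \in X := Hm.
move: (H m); rewrite HmX /=; move/negbT/negP; case.
by apply/forallP => y; apply/implyP => Hy; apply: Hmax.
Qed.

Lemma highestP X x0 : x0 \in X ->
  exists x, [/\ highest par X = Some x, x \in X & forall y, y \in X -> depth x <= depth y].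
Proof.
move=> Hx0; rewrite /highest; case: pickP => [x /andP [Hx /forallP H]|H].
  exists x; split => // y Hy; by have := H y; rewrite Hy.
case: (@arg_minnP _ x0 (mem X) depth Hx0) => m Hm Hmin.
have HmX : m \in X := Hm.
move: (H m); rewrite HmX /=; move/negbT/negP; case.
by apply/forallP => y; apply/implyP => Hy; apply: Hmin.
Qed.

Lemma childToP x v : anc x v -> x != v ->
  exists c, [/\ childTo r par x v = Some c, child c x & anc c v].
Proof.
move=> Hxv Hne; rewrite /childTo; case: pickP => [c /andP [H1 H2]|H].
  by exists c.
case: (exists_child Hxv Hne) => c [H1 H2].
by move: (H c); rewrite H1 H2.
Qed.

Lemma compo_down X x y : x \in X -> anc x y -> (forall b, anc x b -> anc b y -> b \in X) ->
  y \in compo X x.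
Proof. by move=> Hx Hxy Hall; rewrite /Defs.compo inE Hx /=; apply: conn_down. Qed.

Lemma compo_up X x a : x \in X -> anc a x -> (forall b, anc a b -> anc b x -> b \in X) ->
  a \in compo X x.
Proof. by move=> Hx Hax Hall; rewrite /Defs.compo inE Hx /=; apply: conn_up. Qed.

Lemma size_moveTo (w x y : V) : size (moveTo w x ++ [:: y]) <= 2.
Proof. by rewrite size_cat /moveTo; case: (x == w). Qed.

Lemma last_moveTo (w x y : V) : last w (moveTo w x ++ [:: y]) = y.
Proof. by rewrite last_cat. Qed.

Variable v : V.

Lemma stepA R w : canon R -> w \in CR R -> anc w v -> w != v -> ~~ adjG w v ->
  exists x' Q, [/\ size (step w v) <= 2, last w (step w v) = x', canon Q, x' \in CR Q & anc x' v /\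
   (if v \in R then (v \in Q) && (k * #|Q| < #|R|) else k * #|R| < #|Q|)].
Proof.
move=> HR Hw Hwv Hne Hadj.
have HRt := canon_tsub HR.
have HwR := subsetP (CR_sub HRt) _ Hw.
have HvC : v \notin CR R by apply/negP => Hv; move/negP: Hadj; apply; exact: adjG_CR HR Hw Hv Hne.
rewrite /Defs.step (negbTE Hne) (negbTE Hadj) (Cu_eq HR Hw) Hwv /=.
have Hw0 : w \in [set x in CR R | anc x v] by rewrite inE Hw Hwv.
case: (deepestP Hw0) => x [-> ]; rewrite inE => /andP [HxC Hxv] Hmax.
have Hxv' : x != v by apply/negP => /eqP E; move: HvC; rewrite -E HxC.
case: (childToP Hxv Hxv') => x' [-> Hx'c Hx'v].
have Hwx : anc w x.
  have := Hmax w Hw0; case: (anc_total Hwv Hxv) => // Hxw Hd.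
  case: (eqVneq x w) => [->|Hn]; first exact: anc_refl.
  by have := depth_lt Hxw Hn; rewrite ltnNge Hd.
have Hxx' : anc x x' by case: (child_anc Hx'c).
have Hdx' := child_depth Hx'c.
have Hx'C : x' \notin CR R.
  apply/negP => H; have := Hmax x'; rewrite inE H Hx'v => /(_ isT).
  by rewrite leqNgt Hdx'.
case HvR: (v \in R).
  have Hx'R : x' \in R.
    case: (HRt) => _ Hanc _.
    apply: tsub_conv HRt HvR _ Hx'v.
    exact: anc_trans (Hanc _ HwR) (anc_trans Hwx Hxx').
  have HX : x' \in R :\: CR R by rewrite inE Hx'C Hx'R.
  exists x', (compo (R :\: CR R) x'); split => //.
  - exact: size_moveTo.
  - exact: last_moveTo.
  - exact: canS.
  - have Htop : topX (R :\: CR R) x' = x'.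
      apply: topX_uniq => //; first exact: anc_refl.
        by move=> a H1 H2; rewrite -(anc_antisym H1 H2).
      right; case: (child_par Hx'c) => -> _; by rewrite inE HxC.
    have := compo_tsub HX; rewrite Htop => HK.
    exact: rt_CR HK.
  - split => //; apply/andP; split; last exact: CR_comp HRt HX.
    apply: compo_down => // b H1 H2.
    have HbR : b \in R.
      case: (HRt) => _ Hanc _.
      apply: tsub_conv HRt HvR _ H2.
      exact: anc_trans (Hanc _ HwR) (anc_trans Hwx (anc_trans Hxx' H1)).
    rewrite inE HbR andbT; apply/negP => HbC.
    have := Hmax b; rewrite inE HbC H2 => /(_ isT) Hdb.
    have := depth_le H1; move: Hdx' Hdb; clear; lia.
have Hw1 : w \in [set a in R | anc a v] by rewrite inE HwR Hwv.
case: (deepestP Hw1) => z [_]; rewrite inE => /andP [HzR Hzv] Hzmax.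
have Hzv' : z != v by apply/negP => /eqP E; move: HvR; rewrite -E HzR.
case: (exists_child Hzv Hzv') => y [Hyc Hyv].
have HyR : y \notin R.
  apply/negP => H; have := Hzmax y; rewrite inE H Hyv => /(_ isT).
  by rewrite leqNgt (child_depth Hyc).
have Ez := Pgen HR HzR Hyc HyR.
have HzC : z \in CR R by rewrite Ez; exact: lR_CR HRt.
have Hdz := Hmax z; rewrite inE HzC Hzv in Hdz; have {}Hdz := Hdz isT.
have Hx'R : x' \notin R.
  apply/negP => H; have := Hzmax x'; rewrite inE H Hx'v => /(_ isT).
  move: Hdz Hdx'; clear; lia.
have HRT : R <> setT by move=> E; move: HvR; rewrite E inE.
case: (canon_parent HR HRT) => Q [x0 [HQ Hx0 ER]].
have HxR := subsetP (CR_sub HRt) _ HxC.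
have HxQ : x \in Q :\: CR Q by move: HxR; rewrite ER; apply: (subsetP (compo_sub _ _)).
have Hx'Q : x' \in Q.
  apply/negPn/negP => Hn.
  have HQt := canon_tsub HQ.
  have E := Pgen HQ (subsetP (subsetDl _ _) _ HxQ) Hx'c Hn.
  by move: HxQ; rewrite inE E (lR_CR HQt).
have Hx'CQ : x' \in CR Q.
  apply/negPn/negP => Hn.
  have : x' \in R.
    rewrite ER; apply: compo_adj (_ : x \in _) _ _.
    - by rewrite -ER.
    - by rewrite inE Hn Hx'Q.
    - by rewrite /adj Hx'c orbT.
  by rewrite (negbTE Hx'R).
exists x', Q; split => //.
- exact: size_moveTo.
- exact: last_moveTo.
- by split => //; rewrite ER; apply: CR_comp (canon_tsub HQ) Hx0.
Qed.

Lemma stepD R w : canon R -> w \in CR R -> anc v w -> w != v -> ~~ adjG w v ->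
  exists x' Q, [/\ size (step w v) <= 2, last w (step w v) = x', canon Q, x' \in CR Q & anc v x' /\
   (if v \in R then (v \in Q) && (k * #|Q| < #|R|) else k * #|R| < #|Q|)].
Proof.
move=> HR Hw Hvw Hne Hadj.
have HRt := canon_tsub HR.
have HwR := subsetP (CR_sub HRt) _ Hw.
have HvC : v \notin CR R by apply/negP => Hv; move/negP: Hadj; apply; exact: adjG_CR HR Hw Hv Hne.
have Hwv : anc w v = false.
  apply: negbTE; apply/negP => H; move: Hne; by rewrite (anc_antisym H Hvw) eqxx.
rewrite /Defs.step (negbTE Hne) (negbTE Hadj) (Cu_eq HR Hw) Hwv Hvw /=.
have Hw0 : w \in [set x in CR R | anc v x && anc x w] by rewrite inE Hw Hvw anc_refl.
case: (highestP Hw0) => x [-> ]; rewrite inE => /andP [HxC /andP [Hvx Hxw]] Hmin.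
have Hxv' : v != x by apply/negP => /eqP E; move: HvC; rewrite E HxC.
case: (anc_strict_child Hvx Hxv') => Hxr Hvpx.
have Hxpx : child x (par x) by rewrite /child Hxr eqxx.
have Hdpx := child_depth Hxpx.
have HxR := subsetP (CR_sub HRt) _ HxC.
case HvR: (v \in R).
  have HpxR : par x \in R.
    case: (HRt) => _ Hanc _.
    exact: tsub_conv HRt HxR (anc_trans (Hanc _ HvR) Hvpx) (anc_par x).
  have HpxC : par x \notin CR R.
    apply/negP => H; have := Hmin (par x); rewrite inE H Hvpx (anc_trans (anc_par x) Hxw) => /(_ isT).
    by rewrite leqNgt Hdpx.
  have HX : par x \in R :\: CR R by rewrite inE HpxC HpxR.
  have HK : canon (compo (R :\: CR R) (par x)) by exact: canS.
  exists (par x), (compo (R :\: CR R) (par x)); split => //.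
  - exact: size_moveTo.
  - exact: last_moveTo.
  - have HxK : x \notin compo (R :\: CR R) (par x).
      apply/negP => H; have := subsetP (compo_sub _ _) _ H; by rewrite inE HxC.
    rewrite {1}(Pgen HK (compo_self HX) Hxpx HxK).
    exact: lR_CR (canon_tsub HK).
  - split => //; apply/andP; split; last exact: CR_comp HRt HX.
    apply: compo_up => // b H1 H2.
    have HbR : b \in R.
      case: (HRt) => _ Hanc _.
      exact: tsub_conv HRt HpxR (anc_trans (Hanc _ HvR) H1) H2.
    rewrite inE HbR andbT; apply/negP => HbC.
    have := Hmin b; rewrite inE HbC H1 (anc_trans H2 (anc_trans (anc_par x) Hxw)) => /(_ isT) Hdb.
    have := depth_le H2; move: Hdpx Hdb; clear; lia.
have Htw : anc (rt R) w by case: (HRt) => _ Hanc _; apply: Hanc.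
have Hvt : anc v (rt R).
  case: (anc_total Hvw Htw) => // Htv.
  by move: HvR; rewrite (tsub_conv HRt HwR Htv Hvw).
have HtC := rt_CR HRt.
have Hdxt := Hmin (rt R); rewrite inE HtC Hvt Htw in Hdxt; have {}Hdxt := Hdxt isT.
have Ext : x = rt R.
  case: (HRt) => _ Hanc _; have Htx := Hanc _ HxR.
  case: (eqVneq (rt R) x) => [//|Hn].
  by have := depth_lt Htx Hn; rewrite ltnNge Hdxt.
rewrite Ext in Hxr Hxpx Hvpx Hdpx *.
have HRT : R <> setT by move=> E; move: HvR; rewrite E inE.
case: (canon_parent HR HRT) => Q [x0 [HQ Hx0 ER]].
have HtR : rt R \in R by case: HRt.
have HtQ : rt R \in Q :\: CR Q by move: HtR; rewrite {2}ER; apply: (subsetP (compo_sub _ _)).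
have HQt := canon_tsub HQ.
have HpQ : par (rt R) \in Q.
  case: (HQt) => _ _ Hup; apply: Hup; first by move: HtQ; rewrite inE => /andP [].
  apply/negP => /eqP E; move: HtQ; rewrite inE E (rt_CR HQt) //.
have HpR : par (rt R) \notin R.
  apply/negP => H; case: (HRt) => _ Hanc _.
  have E := anc_antisym (Hanc _ H) (anc_par (rt R)).
  by move: (par_neq Hxr); rewrite -E eqxx.
have HpCQ : par (rt R) \in CR Q.
  apply/negPn/negP => Hn.
  have : par (rt R) \in R.
    rewrite {2}ER; apply: compo_adj (_ : rt R \in _) _ _.
    - by rewrite -ER; case: HRt.
    - by rewrite inE Hn HpQ.
    - by rewrite /adj Hxpx.
  by rewrite (negbTE HpR).
exists (par (rt R)), Q; split => //.
- exact: size_moveTo.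
- exact: last_moveTo.
- by split => //; rewrite ER; apply: CR_comp (canon_tsub HQ) Hx0.
Qed.

Definition reach w N := exists t, last w (walk t w v) = v /\ size (walk t w v) <= N.

Lemma reach_step w N : reach (last w (step w v)) N -> reach w (size (step w v) + N).
Proof.
case=> t [H1 H2]; exists t.+1; rewrite /= last_cat H1 size_cat; split => //.
by rewrite leq_add2l.
Qed.

Lemma reach_mono w N M : N <= M -> reach w N -> reach w M.
Proof. by move=> H [t [H1 H2]]; exists t; split => //; apply: leq_trans H2 H. Qed.

Lemma reach_v : reach v 0.
Proof. by exists 0. Qed.

Lemma reach_adj w : w != v -> adjG w v -> reach w 1.
Proof.
move=> Hne Hadj.
have E : step w v = [:: v] by rewrite /Defs.step (negbTE Hne) Hadj.
by have := reach_step (N := 0) (w := w); rewrite E /=; apply; exact: reach_v.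
Qed.

Lemma reach_gen w N M : size (step w v) <= 2 -> reach (last w (step w v)) N ->
  N + 2 <= M -> reach w M.
Proof.
move=> Hs Hr HM; apply: reach_mono (reach_step Hr).
by move: Hs HM; clear; lia.
Qed.

Lemma down j : forall w R, canon R -> w \in CR R -> v \in R -> (anc w v \/ anc v w) ->
  #|R| < 4 ^ j -> reach w (2 * j).
Proof.
elim: j => [|j IH] w R HR Hw HvR Hrel Hcard.
  by move: Hcard; rewrite expn0 ltnS leqn0 cards_eq0 => /eqP E; rewrite E inE in HvR.
case: (eqVneq w v) => [->|Hne]; first exact: reach_mono reach_v.
case Hadj: (adjG w v); first exact: reach_mono (reach_adj Hne Hadj).
have Hadj' : ~~ adjG w v by rewrite Hadj.
have Hfin : forall Q : {set V}, (v \in Q) && (k * #|Q| < #|R|) -> #|Q| < 4 ^ j.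
  move=> Q /andP [_ H]; move: Hcard; rewrite expnS => H2.
  have H3 : 4 * #|Q| <= k * #|Q| by apply: leq_mul.
  move: H H2 H3; clear; lia.
case: Hrel => Hrel.
  case: (stepA HR Hw Hrel Hne Hadj') => x' [Q [Hs Hl HQ Hx' [Hx'v]]].
  rewrite HvR => Hc.
  apply: (reach_gen Hs); last by instantiate (1 := 2 * j); lia.
  rewrite Hl; apply: (IH x' Q HQ Hx') => //; [by case/andP: Hc | by left | exact: Hfin Hc].
case: (stepD HR Hw Hrel Hne Hadj') => x' [Q [Hs Hl HQ Hx' [Hx'v]]].
rewrite HvR => Hc.
apply: (reach_gen Hs); last by instantiate (1 := 2 * j); lia.
rewrite Hl; apply: (IH x' Q HQ Hx') => //; [by case/andP: Hc | by right | exact: Hfin Hc].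
Qed.

Lemma up J j : #|V| < 4 ^ J -> forall w R, canon R -> w \in CR R -> v \notin R ->
  (anc w v \/ anc v w) -> #|V| < 4 ^ j * #|R| -> reach w (2 * j + 2 * J).
Proof.
move=> HJ; elim: j => [|j IH] w R HR Hw HvR Hrel Hcard.
  by move: Hcard; rewrite expn0 mul1n ltnNge max_card.
have HwR := subsetP (CR_sub (canon_tsub HR)) _ Hw.
have Hne : w != v by apply/negP => /eqP E; move: HvR; rewrite -E HwR.
case Hadj: (adjG w v).
  by apply: reach_mono (reach_adj Hne Hadj); clear; lia.
have Hadj' : ~~ adjG w v by rewrite Hadj.
have Hnext : forall x' Q, canon Q -> x' \in CR Q -> (anc x' v \/ anc v x') ->
    k * #|R| < #|Q| -> reach x' (2 * j + 2 * J).
  move=> x' Q HQ Hx' Hrel' Hc.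
  case HvQ: (v \in Q).
    apply: reach_mono (down (j := J) HQ Hx' HvQ Hrel' _); first by clear; lia.
    by apply: leq_ltn_trans HJ; apply: max_card.
  apply: (IH x' Q HQ Hx') => //; first by rewrite HvQ.
  apply: (leq_trans Hcard).
  rewrite expnSr -mulnA leq_pmul2l ?expn_gt0 //.
  have H3 : 4 * #|R| <= k * #|R| by apply: leq_mul.
  by move: H3 Hc; clear; lia.
have HvR' : (v \in R) = false by apply: negbTE.
case: Hrel => Hrel.
  case: (stepA HR Hw Hrel Hne Hadj') => x' [Q [Hs Hl HQ Hx' [Hx'v]]].
  rewrite HvR' => Hc.
  apply: (reach_gen Hs); last by instantiate (1 := 2 * j + 2 * J); lia.
  by rewrite Hl; apply: Hnext Hc => //; left.
case: (stepD HR Hw Hrel Hne Hadj') => x' [Q [Hs Hl HQ Hx' [Hx'v]]].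
rewrite HvR' => Hc.
apply: (reach_gen Hs); last by instantiate (1 := 2 * j + 2 * J); lia.
by rewrite Hl; apply: Hnext Hc => //; right.
Qed.

Lemma route u : anc u v \/ anc v u ->
  exists t, last u (walk t u v) = v /\ size (walk t u v) <= 4 * trunc_log 2 #|V| + 4.
Proof.
move=> Hrel.
change (reach u (4 * trunc_log 2 #|V| + 4)).
set J := (trunc_log 2 #|V|).+1.
have HJ : #|V| < 4 ^ J.
  apply: (leq_trans (trunc_log_ltn #|V| (isT : 1 < 2))).
  by rewrite leq_exp2r.
case: (canon_cover u) => R [HR Hu].
case HvR: (v \in R).
  apply: (reach_mono _ (down HR Hu HvR Hrel (leq_ltn_trans (max_card _) HJ))).
  by rewrite /J; clear; lia.
apply: (reach_mono _ (up (j := J) HJ HR Hu (negbT HvR) Hrel _)).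
  by rewrite /J; clear; lia.
apply: (leq_trans HJ); rewrite -[X in X <= _]muln1 leq_mul2l.
apply/orP; right; apply/card_gt0P; exists u.
exact: (subsetP (CR_sub (canon_tsub HR)) _ Hu).
Qed.

End Tree.

Theorem lemma14 :
  forall k : nat, 4 <= k ->
  exists c : nat,
  forall (V : finType) (r : V) (par : V -> V) (c1 : V -> option V),
    rooted_tree r par -> leftmost_spec r par c1 ->
    forall u v : V, anc par u v \/ anc par v u ->
    exists t : nat,
      last u (walk r par c1 k t u v) = v /\
      size (walk r par c1 k t u v) <= c * trunc_log 2 #|V| + c.
Proof.
move=> k Hk; exists 4 => V r par c1 Ht Hl u v Huv.
exact: (route Ht Hl Hk Huv).
Qed.
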